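(* Let $Y$ be a Young diagram with row lengths $a_1\ge\cdots\ge a_m\ge0$ and let $Q\subseteq C\times S$. Then there exists a 2-cover $P$ of $H(Y)$ with $P\cap(C\times S)=Q$ and $$\tau^{(2)}(H(Y))\le |P|=|Q|+\sum_{i=1}^m \nu(a_i,Q).$$
   Context: $H(Y)$ is the hypergraph with vertex sides $R=\{r_1,\dots,r_m\}$, $C=\{c_1,\dots,c_{a_1}\}$, $S=\{s_1,\dots,s_{a_1}\}$ and edges $\{r_i,c_j,s_k\}$ for $1\le i\le m$, $1\le j,k\le a_i$. For disjoint sets $A,B$, $A\times B$ denotes the set of pairs $\{a,b\}$, $a\in A$, $b\in B$. A 2-cover of $H(Y)$ is a set of pairs of vertices such that every edge contains some pair of the set; $\tau^{(2)}(H(Y))$ is the minimum size of a 2-cover. $\nu(\ell,Q)$ is the matching number of the bipartite graph with sides $\{c_1,\dots,c_\ell\}$, $\{s_1,\dots,s_\ell\}$ and edges $\{c_js_k:1\le j,k\le\ell\}\setminus Q$. *)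

(* Defs.v *)
From mathcomp Require Import all_boot.
Set Implicit Arguments. Unset Strict Implicit. Unset Printing Implicit Defensive.

(* Vertices of H(Y): R = {r_1..r_m} = 'I_m, C = {c_1..c_n}, S = {s_1..s_n}
   with n = a_1 (indices shifted to start at 0). *)
Notation vert m n := ('I_m + ('I_n + 'I_n))%type.

(* a_1 = max row length (= a_1 for nonincreasing a; 0 if m = 0) *)
Definition a1 (m : nat) (a : 'I_m -> nat) : nat := \max_(i < m) a i.

Section HY.
Variables (m n : nat).
Local Notation V := (vert m n).

Definition rv (i : 'I_m) : V := inl i.
Definition cv (j : 'I_n) : V := inr (inl j).
Definition sv (k : 'I_n) : V := inr (inr k).

Definition CxS : {set {set V}} :=
  [set p : {set V} | [exists j : 'I_n, exists k : 'I_n, p == [set cv j; sv k]]].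

Definition is_edge (a : 'I_m -> nat) (e : {set V}) : bool :=
  [exists i : 'I_m, exists j : 'I_n, exists k : 'I_n,
     [&& j < a i, k < a i & e == [set rv i; cv j; sv k]]].

Definition two_cover (a : 'I_m -> nat) (P : {set {set V}}) : bool :=
  [forall p in P, #|p| == 2] &&
  [forall e : {set V}, is_edge a e ==> [exists p in P, p \subset e]].

(* tau^(2)(H(Y)): minimum size of a 2-cover (the set of all pairs is a
   2-cover, so its size is a valid initial bound for the minimum) *)
Definition tau2 (a : 'I_m -> nat) : nat :=
  \big[minn/#|[set p : {set V} | #|p| == 2]|]_(P : {set {set V}} | two_cover a P) #|P|.

Definition bip_edges (l : nat) (Q : {set {set V}}) : {set {set V}} :=
  [set p : {set V} | [exists j : 'I_n, exists k : 'I_n,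
      [&& j < l, k < l & p == [set cv j; sv k]]]] :\: Q.

Definition is_matching (E M : {set {set V}}) : bool :=
  (M \subset E) &&
  [forall e in M, forall f in M, (e != f) ==> [disjoint e & f]].

Definition nu (l : nat) (Q : {set {set V}}) : nat :=
  \max_(M : {set {set V}} | is_matching (bip_edges l Q) M) #|M|.

End HY.
Arguments two_cover : clear implicits.
Arguments tau2 : clear implicits.
Arguments nu : clear implicits.

(* Main.v *)
Require Import Defs.
From mathcomp Require Import all_boot zify.
Set Implicit Arguments. Unset Strict Implicit. Unset Printing Implicit Defensive.
Section Hall.
Variables (A B : finType) (E : A -> B -> bool) (b0 : B).
Definition NB (Y : {set B}) (T : {set A}) := [set b in Y | [exists a in T, E a b]].

Lemma hall (X : {set A}) (Y : {set B}) :
  (forall T : {set A}, T \subset X -> #|T| <= #|NB Y T|) ->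
  exists f : A -> B, [/\ {in X &, injective f},
     forall a, a \in X -> f a \in Y & forall a, a \in X -> E a (f a)].
Proof.
have [k Hk] := ubnP #|X|; elim: k X Hk Y => // k IH X HX Y H.
case: (set_0Vmem X) => [X0 | [x xX]].
  by exists (fun _ => b0); split=> [a1 a2|a|a]; rewrite X0 in_set0.
case: (boolP [exists T : {set A}, [&& T \subset X, T != set0, T != X & #|NB Y T| <= #|T|]]).
- case/existsP => T /and4P [TX T0 TXn TN].
  have HT : #|T| < #|X| by apply: proper_card; rewrite properEneq TXn.
  have [g [ginj gY gE]] : exists g : A -> B, [/\ {in T &, injective g},
     forall a, a \in T -> g a \in Y & forall a, a \in T -> E a (g a)].
    apply: IH; first by lia.
    by move=> U UT; apply: H; apply: subset_trans TX.
  have T0' : 0 < #|T| by rewrite card_gt0.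
  have HXT : #|X :\: T| = #|X| - #|T| by rewrite cardsD (setIidPr TX).
  have HTc : #|T| <= #|X| by apply: subset_leq_card.
  have [h [hinj hY hE]] : exists h : A -> B, [/\ {in X :\: T &, injective h},
     forall a, a \in X :\: T -> h a \in Y :\: NB Y T &
     forall a, a \in X :\: T -> E a (h a)].
    apply: IH; first by lia.
    move=> U UXT.
    have UX : U :|: T \subset X by rewrite subUset TX (subset_trans UXT) // subsetDl.
    have H1 := H _ UX.
    have dis : U :&: T = set0.
      apply/setP => a; rewrite !inE; apply/negbTE/negP => /andP [aU aT].
      by move: (subsetP UXT a aU); rewrite !inE aT.
    have e1 : #|U :|: T| = #|U| + #|T| by rewrite cardsU dis cards0; lia.
    have sub : NB Y (U :|: T) \subset NB (Y :\: NB Y T) U :|: NB Y T.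
      apply/subsetP => b; rewrite !inE => /andP [bY /existsP [a /andP [aUT Eab]]].
      rewrite bY /=.
      case bT: [exists a0 in T, E a0 b]; first by rewrite orbT.
      rewrite orbF; apply/existsP; exists a; rewrite Eab andbT.
      move: aUT; rewrite inE => /orP [] // aT.
      by move: bT => /negbT /existsPn /(_ a); rewrite aT Eab.
    have := subset_leq_card sub; rewrite cardsU; lia.
  exists (fun a => if a \in T then g a else h a); split.
  + move=> a1 a2 a1X a2X /=.
    case a1T: (a1 \in T); case a2T: (a2 \in T).
    * exact: ginj.
    * move=> E12; have := hY a2; rewrite !inE a2T a2X => /(_ isT) /andP [/negP nP _].
      exfalso; apply: nP; rewrite -E12 gY ?a1T //=; apply/existsP; exists a1; by rewrite a1T gE.
    * move=> E12; have := hY a1; rewrite !inE a1T a1X => /(_ isT) /andP [/negP nP _].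
      exfalso; apply: nP; rewrite E12 gY ?a2T //=; apply/existsP; exists a2; by rewrite a2T gE.
    * by apply: hinj; rewrite inE ?a1T ?a2T.
  + move=> a aX; case aT: (a \in T); first exact: gY.
    by have := hY a; rewrite !inE aT aX => /(_ isT) /andP [].
  + move=> a aX; case aT: (a \in T); first exact: gE.
    by apply: hE; rewrite inE aT.
- move/existsPn => strict.
  have Hx := H [set x]; rewrite sub1set xX cards1 in Hx.
  have /set0Pn [y] : NB Y [set x] != set0 by rewrite -card_gt0; apply: Hx.
  rewrite !inE => /andP [yY /existsP [x' /andP [/set1P -> Exy]]].
  have [h [hinj hY hE]] : exists h : A -> B, [/\ {in X :\ x &, injective h},
     forall a, a \in X :\ x -> h a \in Y :\ y &
     forall a, a \in X :\ x -> E a (h a)].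
    apply: IH; first by move: HX; rewrite (cardsD1 x X) xX; lia.
    move=> U UX.
    case: (set_0Vmem U) => [-> | [u uU]]; first by rewrite cards0.
    have UX' : U \subset X by apply: subset_trans UX (subsetDl _ _).
    have UnX : U != X.
      apply/eqP => UXe; move: (subsetP UX x); rewrite UXe xX !inE eqxx.
      by move=> /(_ isT).
    have U0 : U != set0 by apply/set0Pn; exists u.
    have := strict U; rewrite UX' U0 UnX /= -ltnNge => lt.
    have sub : NB Y U \subset NB (Y :\ y) U :|: [set y].
      apply/subsetP => b; rewrite !inE => /andP [bY ex].
      by rewrite bY ex; case: (b == y).
    have := subset_leq_card sub; rewrite cardsU cards1; lia.
  exists (fun a => if a == x then y else h a); split.
  + move=> a1 a2 a1X a2X /=.
    case: (eqVneq a1 x) => [->|a1x]; case: (eqVneq a2 x) => [->|a2x] //.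
    * move=> E12; have := hY a2; rewrite !inE a2x a2X -E12 eqxx.
      by move=> /(_ isT).
    * move=> E12; have := hY a1; rewrite !inE a1x a1X E12 eqxx.
      by move=> /(_ isT).
    * by apply: hinj; rewrite !inE ?a1x ?a2x.
  + move=> a aX; case: (eqVneq a x) => [//|ax].
    by have := hY a; rewrite !inE ax aX => /(_ isT) /andP [].
  + move=> a aX; case: (eqVneq a x) => [->//|ax].
    by apply: hE; rewrite !inE ax aX.
Qed.
End Hall.
Section Konig.
Variables (A B : finType) (E : A -> B -> bool).

Lemma konig : exists (WA : {set A}) (WB : {set B}) (M : {set A * B}),
  [/\ forall a b, E a b -> (a \in WA) || (b \in WB),
      forall p, p \in M -> E p.1 p.2,
      {in M &, forall p q, p.1 = q.1 -> p = q},
      {in M &, forall p q, p.2 = q.2 -> p = q}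
    & #|M| = #|WA| + #|WB|].
Proof.
case: (pickP A) => [a0 _|A0].
2: { exists set0, set0, set0; split.
     - by move=> a; move: (A0 a).
     - by move=> p; rewrite inE.
     - by move=> p q; rewrite inE.
     - by move=> p q; rewrite inE.
     - by rewrite !cards0. }
case: (pickP B) => [b0 _|B0].
2: { exists set0, set0, set0; split.
     - by move=> a b; move: (B0 b).
     - by move=> p; rewrite inE.
     - by move=> p q; rewrite inE.
     - by move=> p q; rewrite inE.
     - by rewrite !cards0. }
pose NT (S : {set A}) := NB E setT S.
pose g (S : {set A}) := #|S| + #|~: NT S|.
pose S := [arg max_(S > set0 | true) g S].
have Smax : forall T, g T <= g S.
  rewrite /S; case: arg_maxnP => // S0 _ HS T; exact: HS.
have H1 : forall T : {set A}, T \subset ~: S -> #|T| <= #|NB E (~: NT S) T|.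
  move=> T TS.
  have := Smax (S :|: T); rewrite /g.
  have dis : S :&: T = set0.
    apply/setP => a; rewrite !inE; apply/negbTE/negP => /andP [aS aT].
    by move: (subsetP TS a aT); rewrite !inE aS.
  have e1 : #|S :|: T| = #|S| + #|T| by rewrite cardsU dis cards0; lia.
  have sub : NT (S :|: T) \subset NT S :|: NB E (~: NT S) T.
    apply/subsetP => b; rewrite /NT /NB !inE => /existsP [a /andP [aST Eab]].
    case bS: [exists a0 in S, E a0 b] => //=.
    apply/existsP; exists a; rewrite Eab andbT.
    move: aST; rewrite inE => /orP [] // aS.
    by move: bS => /negbT /existsPn /(_ a); rewrite aS Eab.
  have := subset_leq_card sub; rewrite cardsU.
  have := cardsC (NT S); have := cardsC (NT (S :|: T)). lia.
have [f1 [f1inj f1Y f1E]] := hall b0 H1.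
pose E' := fun b a => E a b.
have H2 : forall R : {set B}, R \subset NT S -> #|R| <= #|NB E' S R|.
  move=> R RN.
  pose S' := S :\: NB E' S R.
  have := Smax S'; rewrite /g.
  have sub1 : NB E' S R \subset S by apply/subsetP => a; rewrite inE => /andP [].
  have e1 : #|S'| = #|S| - #|NB E' S R| by rewrite cardsD (setIidPr sub1).
  have e2 : #|NB E' S R| <= #|S| by apply: subset_leq_card.
  have dis : NT S' :&: R = set0.
    apply/setP => b; rewrite !inE; apply/negbTE/negP => /andP [/existsP [a /andP [aS' Eab]] bR].
    move: aS'; rewrite /S' /NB !inE => /andP [/negP nN aS]; apply: nN.
    rewrite aS /=; apply/existsP; exists b; by rewrite bR.
  have sub : NT S' :|: R \subset NT S.
    rewrite subUset RN andbT; apply/subsetP => b; rewrite !inE => /existsP [a /andP [aS' Eab]].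
    apply/existsP; exists a; rewrite Eab andbT.
    by move: aS'; rewrite !inE => /andP [].
  have := subset_leq_card sub; rewrite cardsU dis cards0.
  have := cardsC (NT S); have := cardsC (NT S'). lia.
have [g2 [g2inj g2Y g2E]] := hall a0 H2.
pose M := [set (a, f1 a) | a in ~: S] :|: [set (g2 b, b) | b in NT S].
have g2S : forall b, b \in NT S -> g2 b \in S by move=> b /g2Y.
have f1N : forall a, a \in ~: S -> f1 a \notin NT S.
  by move=> a /f1Y; rewrite inE.
exists (~: S), (NT S), M; split.
- move=> a b Eab; rewrite inE; case aS: (a \in S) => //=.
  rewrite /NT /NB !inE; apply/existsP; exists a; by rewrite aS.
- move=> p; rewrite inE => /orP [] /imsetP [x xS ->] /=; first exact: f1E.
  exact: g2E.
- move=> p q; rewrite !inE => /orP [] /imsetP [x xS ->] /orP [] /imsetP [y yS ->] /= e.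
  + by rewrite e.
  + by move: xS; rewrite inE e g2S.
  + by move: yS; rewrite inE -e g2S.
  + by rewrite (g2inj x y).
- move=> p q; rewrite !inE => /orP [] /imsetP [x xS ->] /orP [] /imsetP [y yS ->] /= e.
  + by rewrite (f1inj x y).
  + by move: (f1N x xS); rewrite e yS.
  + by move: (f1N y yS); rewrite -e xS.
  + by rewrite e.
- have dis : [set (a, f1 a) | a in ~: S] :&: [set (g2 b, b) | b in NT S] = set0.
    apply/setP => p; rewrite !inE; apply/negbTE/negP.
    case/andP => /imsetP [x xS ->] /imsetP [y yN [e1 e2]].
    by move: xS; rewrite inE e1 g2S.
  rewrite /M cardsU dis cards0 subn0 !card_in_imset //.
  + by move=> x y _ _ [].
  + by move=> x y _ _ [].
Qed.
End Konig.
Lemma card_le_disj (T : finType) (M : {set {set T}}) (W : {set T}) :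
  (forall e f, e \in M -> f \in M -> e != f -> [disjoint e & f]) ->
  (forall e, e \in M -> exists2 v, v \in e & v \in W) -> #|M| <= #|W|.
Proof.
move=> Hd Hw.
pose h e := [pick v in e :&: W].
have hS : forall e, e \in M -> exists2 v, h e = Some v & v \in e :&: W.
  move=> e eM; rewrite /h; case: pickP => [v vi|none]; first by exists v.
  by have [v ve vW] := Hw e eM; move: (none v); rewrite inE ve vW.
have inj : {in M &, injective h}.
  move=> e f eM fM hef; have [v hv ve] := hS e eM; have [w hw wf] := hS f fM.
  move: hef; rewrite hv hw => -[vw]; subst w.
  apply/eqP; apply/negP => /negP ne; have := Hd e f eM fM ne.
  move/disjoint_setI0/setP/(_ v); rewrite !inE.
  by move: ve wf; rewrite !inE => /andP [-> _] /andP [-> _].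
rewrite -(card_in_imset inj) -(card_imset W (@Some_inj _)).
apply: subset_leq_card; apply/subsetP => o /imsetP [e eM ->].
have [v -> ] := hS e eM; rewrite inE => /andP [_ vW]; exact: imset_f.
Qed.

Section Main.
Variables (m n : nat).
Local Notation V := (vert m n).

Lemma pair_inj (j j' k k' : 'I_n) :
  [set cv m j; sv m k] = [set cv m j'; sv m k'] -> j = j' /\ k = k'.
Proof.
move=> e.
have : cv m j \in [set cv m j'; sv m k'] by rewrite -e set21.
have : sv m k \in [set cv m j'; sv m k'] by rewrite -e set22.
rewrite !inE /cv /sv => /orP [/eqP [] //| /eqP [] ->] /orP [/eqP [] -> // | /eqP []//].
Qed.

Lemma rpair_inj (i i' : 'I_m) (u u' : 'I_n + 'I_n) :
  [set (inl i : V); inr u] = [set inl i'; inr u'] -> i = i' /\ u = u'.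
Proof.
move=> e.
have : (inl i : V) \in [set inl i'; inr u'] by rewrite -e set21.
have : (inr u : V) \in [set inl i'; inr u'] by rewrite -e set22.
rewrite !inE => /orP [/eqP [] //| /eqP [] ->] /orP [/eqP [] -> // | /eqP []//].
Qed.

Definition Erel (l : nat) (Q : {set {set V}}) (j k : 'I_n) : bool :=
  [&& j < l, k < l & [set cv m j; sv m k] \notin Q].

Lemma nu_eq (l : nat) (Q : {set {set V}}) (WA WB : {set 'I_n}) (M : {set 'I_n * 'I_n}) :
  (forall a b, Erel l Q a b -> (a \in WA) || (b \in WB)) ->
  (forall p, p \in M -> Erel l Q p.1 p.2) ->
  {in M &, forall p q, p.1 = q.1 -> p = q} ->
  {in M &, forall p q, p.2 = q.2 -> p = q} ->
  #|M| = #|WA| + #|WB| ->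
  nu m n l Q = #|WA| + #|WB|.
Proof.
move=> Hc HE H1 H2 HM; apply/eqP; rewrite eqn_leq; apply/andP; split.
- apply/bigmax_leqP => M' /andP [Msub /forallP Mdisj].
  pose W := [set cv m j | j in WA] :|: [set sv m k | k in WB].
  have cW : #|W| = #|WA| + #|WB|.
    have dis : [set cv m j | j in WA] :&: [set sv m k | k in WB] = set0.
      apply/setP => v; rewrite !inE; apply/negbTE/negP.
      by case/andP => /imsetP [x _ ->] /imsetP [y _ []].
    rewrite cardsU dis cards0 subn0 !card_imset //.
    + by move=> x y [].
    + by move=> x y [].
  rewrite -cW; apply: card_le_disj.
  + move=> e f eM fM ne; have := Mdisj e; rewrite eM => /forall_inP /(_ f fM).
    by rewrite ne.
  + move=> e eM; move: (subsetP Msub e eM); rewrite !inE => /andP [eQ /existsP [j /existsP [k /and3P [jl kl /eqP ee]]]].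
    have : Erel l Q j k by rewrite /Erel jl kl -ee eQ.
    move/Hc => /orP [jA | kB].
    * by exists (cv m j); rewrite ?ee ?set21 // inE imset_f.
    * by exists (sv m k); rewrite ?ee ?set22 // inE imset_f ?orbT.
- pose Mc := [set [set cv m p.1; sv m p.2] | p in M].
  have cMc : #|Mc| = #|M|.
    apply: card_in_imset => -[j k] [j' k'] _ _ /= /pair_inj [-> ->] //.
  rewrite -HM -cMc; apply: leq_bigmax_cond.
  apply/andP; split.
  + apply/subsetP => e /imsetP [p pM ->]; have := HE p pM.
    rewrite /Erel !inE => /and3P [jl kl nQ]; rewrite nQ /=.
    apply/existsP; exists p.1; apply/existsP; exists p.2; by rewrite jl kl eqxx.
  + apply/forall_inP => e /imsetP [p pM ->]; apply/forall_inP => f /imsetP [q qM ->].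
    apply/implyP => ne.
    have pq : p != q by apply: contraNneq ne => ->.
    have d1 : p.1 != q.1 by apply: contraNneq pq => /(H1 p q pM qM) ->.
    have d2 : p.2 != q.2 by apply: contraNneq pq => /(H2 p q pM qM) ->.
    rewrite disjoints_subset; apply/subsetP => v; rewrite !inE /cv /sv.
    move=> /orP [] /eqP ->; apply/negP => /orP [] /eqP.
    * by case=> e1; move: d1; rewrite e1 eqxx.
    * by [].
    * by [].
    * by case=> e1; move: d2; rewrite e1 eqxx.
Qed.

End Main.

Lemma bigmin_le (I : finType) (P : pred I) (F : I -> nat) x i0 :
  P i0 -> \big[minn/x]_(i | P i) F i <= F i0.
Proof.
move=> Pi0; rewrite -big_filter.
have : i0 \in [seq i <- index_enum I | P i] by rewrite mem_filter Pi0 mem_index_enum.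
elim: [seq i <- index_enum I | P i] => //= y s IH; rewrite in_cons big_cons.
case/orP => [/eqP <-|/IH h]; first exact: geq_minl.
exact: leq_trans (geq_minr _ _) h.
Qed.

Theorem corollary1 (m : nat) (a : 'I_m -> nat)
  (Ha : forall i j : 'I_m, i <= j -> a j <= a i)
  (Q : {set {set vert m (a1 a)}})
  (HQ : Q \subset CxS m (a1 a)) :
  exists P : {set {set vert m (a1 a)}},
    [/\ two_cover m (a1 a) a P,
        P :&: CxS m (a1 a) = Q,
        tau2 m (a1 a) a <= #|P|
      & #|P| = #|Q| + \sum_(i < m) nu m (a1 a) (a i) Q].
Proof.
set n := a1 a.
pose KP (i : 'I_m) (t : {set 'I_n} * {set 'I_n} * {set 'I_n * 'I_n}) :=
  [/\ forall x y, Erel (a i) Q x y -> (x \in t.1.1) || (y \in t.1.2),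
      forall p, p \in t.2 -> Erel (a i) Q p.1 p.2,
      {in t.2 &, forall p q, p.1 = q.1 -> p = q},
      {in t.2 &, forall p q, p.2 = q.2 -> p = q}
    & #|t.2| = #|t.1.1| + #|t.1.2|].
have : forall i, exists t, KP i t.
  move=> i; have [WA [WB [M [h1 h2 h3 h4 h5]]]] := konig (Erel (a i) Q).
  by exists (WA, WB, M).
case/fin_all_exists => T HT.
pose WA i := (T i).1.1. pose WB i := (T i).1.2.
have nuE : forall i, nu m n (a i) Q = #|WA i| + #|WB i|.
  move=> i; have [h1 h2 h3 h4 h5] := HT i; exact: nu_eq h1 h2 h3 h4 h5.
have cover : forall i x y, Erel (a i) Q x y -> (x \in WA i) || (y \in WB i).
  by move=> i; have [h1 _ _ _ _] := HT i.
pose Wi i : {set 'I_n + 'I_n} := inl @: WA i :|: inr @: WB i.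
pose D := [set x : 'I_m * ('I_n + 'I_n) | x.2 \in Wi x.1].
pose F (x : 'I_m * ('I_n + 'I_n)) : {set vert m n} := [set inl x.1; inr x.2].
pose P := Q :|: F @: D.
have Finj : injective F.
  by move=> [i u] [i' u'] /rpair_inj [/= -> ->].
have FnC : forall x, F x \notin CxS m n.
  move=> [i u]; rewrite inE; apply/negP => /existsP [j /existsP [k /eqP e]].
  have : (inl i : vert m n) \in [set cv m j; sv m k] by rewrite -e set21.
  by rewrite !inE /cv /sv => /orP [] /eqP.
have dis : Q :&: F @: D = set0.
  apply/setP => p; rewrite !inE; apply/negbTE/negP => /andP [pQ /imsetP [x _ px]].
  by move: (FnC x); rewrite -px (subsetP HQ p pQ).
have cWi : forall i, #|Wi i| = #|WA i| + #|WB i|.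
  move=> i.
  have d : inl @: WA i :&: inr @: WB i = set0.
    apply/setP => v; rewrite !inE; apply/negbTE/negP.
    by case/andP => /imsetP [x _ ->] /imsetP [y _ []].
  rewrite /Wi cardsU d cards0 subn0 !card_imset //.
  + by move=> x y [].
  + by move=> x y [].
have cD : #|D| = \sum_(i < m) (#|WA i| + #|WB i|).
  rewrite -sum1_card.
  rewrite (eq_bigl (fun x : 'I_m * ('I_n + 'I_n) => true && (x.2 \in Wi x.1))); last first.
    by move=> x; rewrite inE.
  rewrite -(pair_big_dep xpredT (fun i u => u \in Wi i) (fun _ _ => 1)) /=.
  apply: eq_bigr => i _; by rewrite sum1_card cWi.
have two : two_cover m n a P.
  apply/andP; split.
  - apply/forall_inP => p; rewrite inE => /orP [pQ | /imsetP [x _ ->]].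
    + move: (subsetP HQ p pQ); rewrite inE => /existsP [j /existsP [k /eqP ->]].
      by rewrite cards2 /cv /sv.
    + by rewrite cards2.
  - apply/forallP => e; apply/implyP => /existsP [i /existsP [j /existsP [k /and3P [ji ki /eqP ->]]]].
    case pQ: ([set cv m j; sv m k] \in Q).
    + apply/existsP; exists [set cv m j; sv m k]; rewrite inE pQ /=.
      apply/subsetP => v; rewrite !inE => /orP [] ->; by rewrite ?orbT.
    + have : Erel (a i) Q j k by rewrite /Erel ji ki pQ.
      move/cover => /orP [jA | kB].
      * apply/existsP; exists (F (i, inl j)); rewrite inE imset_f ?orbT /=; last first.
          by rewrite inE /= /Wi inE imset_f.
        apply/subsetP => v; rewrite !inE => /orP [] /eqP ->; by rewrite eqxx ?orbT.
      * apply/existsP; exists (F (i, inr k)); rewrite inE imset_f ?orbT /=; last first.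
          by rewrite inE /= /Wi inE imset_f ?orbT.
        apply/subsetP => v; rewrite !inE => /orP [] /eqP ->; by rewrite eqxx ?orbT.
exists P; split.
- exact: two.
- rewrite setIUl (setIidPl HQ).
  have -> : F @: D :&: CxS m n = set0.
    apply/setP => p; rewrite !inE; apply/negbTE/negP => /andP [/imsetP [x _ ->]].
    by move=> h; move: (FnC x); rewrite inE h.
  by rewrite setU0.
- exact: bigmin_le.
- rewrite cardsU dis cards0 subn0 card_imset // cD.
  congr (_ + _); apply: eq_bigr => i _; by rewrite nuE.
Qed.
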